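(* Let $X$ be a topological space and $x\in X$. Then $nu(X)\ge\left|\bigcup\{M: M$ is a maximal finitely non-Hausdorff subset of $X$ with $x\in M\}\right|$.
   Context: A non-empty subset $A$ of $X$ is finitely non-Hausdorff if for every non-empty finite $F\subseteq A$ and every family $\{U_y:y\in F\}$ of open neighborhoods $U_y$ of $y$, $\bigcap_{y\in F}U_y\neq\emptyset$; it is maximal finitely non-Hausdorff if no finitely non-Hausdorff subset of $X$ properly contains it. $A$ is finitely non-Urysohn if instead $\bigcap_{y\in F}\overline{U_y}\neq\emptyset$ for all such $F$ and families. The non-Urysohn number is $nu(X):=1+\sup\{|A|:A\subseteq X$ finitely non-Urysohn$\}$. *)

(* Defs.v *)
From HB Require Import structures.
From mathcomp Require Import all_boot all_order all_algebra.
From mathcomp Require Import all_classical all_reals all_analysis.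
Set Implicit Arguments. Unset Strict Implicit. Unset Printing Implicit Defensive.
Local Open Scope classical_set_scope.
Local Open Scope card_scope.

Definition fin_nonHausdorff (X : topologicalType) (A : set X) : Prop :=
  A !=set0 /\
  forall (F : set X) (U : X -> set X),
    finite_set F -> F !=set0 -> F `<=` A ->
    (forall y, F y -> open (U y) /\ U y y) ->
    \bigcap_(y in F) U y !=set0.

Definition max_fin_nonHausdorff (X : topologicalType) (M : set X) : Prop :=
  fin_nonHausdorff M /\
  forall B : set X, fin_nonHausdorff B -> M `<=` B -> B = M.

Definition fin_nonUrysohn (X : topologicalType) (A : set X) : Prop :=
  A !=set0 /\
  forall (F : set X) (U : X -> set X),
    finite_set F -> F !=set0 -> F `<=` A ->
    (forall y, F y -> open (U y) /\ U y y) ->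
    \bigcap_(y in F) closure (U y) !=set0.

(* Cardinal 1 + |A|, realised as the subset {None} ∪ Some(A) of option X. *)
Definition one_plus (X : Type) (A : set X) : set (option X) :=
  [set None] `|` (Some @` A).

(* The cardinal represented by C (a set in an arbitrary type) is an upper
   bound of nu(X) = 1 + sup{|A| : A finitely non-Urysohn}.
   Since the family is nonempty (singletons are finitely non-Urysohn),
   1 + sup S = sup {1 + s : s ∈ S}, so this holds iff 1 + |A| <= |C|
   for every finitely non-Urysohn A. *)
Definition nu_le (X : topologicalType) (L : Type) (C : set L) : Prop :=
  forall A : set X, fin_nonUrysohn A -> one_plus A #<= C.

(* |B| <= nu(X): |B| is below every upper bound of nu(X), i.e. below the
   least one, which is nu(X) itself. *)
Definition card_le_nu (X : topologicalType) (Y : Type) (B : set Y) : Prop :=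
  forall (L : Type) (C : set L), nu_le X C -> B #<= C.

(* Main.v *)
Require Import Defs.
From mathcomp Require Import all_boot all_order all_algebra.
From mathcomp Require Import all_classical all_reals all_analysis.
Local Open Scope classical_set_scope.

Lemma key (X : topologicalType) (x y : X) (M : set X) (Uy : set X) :
  fin_nonHausdorff M -> M x -> M y -> open Uy -> Uy y -> closure Uy x.
Proof.
move=> [_ HM] Mx My oU Uyy B; rewrite nbhsE => -[V [oV Vx] VB].
have [exy|nxy] := pselect (x = y).
  subst y.
  by exists x; split => //; apply: VB.
pose W := fun z => if pselect (z = y) then Uy else V.
have := HM [set x; y] W (finite_set2 x y) _ _ _.
case.
- by exists x; left.
- by move=> z [->|->].
- move=> z [->|->]; rewrite /W.
    by case: pselect => // _; split.
  by case: pselect => // _; split.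
- move=> p Hp; exists p; split.
  + have := Hp y (or_intror erefl); rewrite /W; by case: pselect.
  + apply: VB; have := Hp x (or_introl erefl); rewrite /W; by case: pselect.
Qed.

Theorem corollary2p18 (X : topologicalType) (x : X) :
  card_le_nu X (\bigcup_(M in [set M : set X | max_fin_nonHausdorff M /\ M x]) M).
Proof.
set S := \bigcup_(_ in _) _.
move=> L C HC.
have [->|/set0P [y0 Sy0]] := eqVneq S set0.
  by apply: card_ge0.
have NU : fin_nonUrysohn S.
  split; first by exists y0.
  move=> F U _ _ FS HU; exists x => y Fy.
  have [M [[HM _] Mx] My] := FS y Fy.
  have [oU Uy] := HU y Fy.
  exact: (@key X x y M (U y) HM Mx My oU Uy).
have := HC S NU.
rewrite -(card_ge_some (A:=S)) => H.
apply: card_le_trans H; apply: subset_card_le => z Hz; by right.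
Qed.
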